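(* Let $r$, $s$, $c$, $d$ and $a_n$ be any integers with $r\neq0$, and assume $p^2-4q\neq0$ and that $V_d$, $V_{r+d}$, $U_r$ are nonzero. If $n$ is a positive even integer, then \[ \begin{split} &\sum_{a_{n-1}=c}^{a_n}\sum_{a_{n-2}=c}^{a_{n-1}}\cdots\sum_{a_0=c}^{a_1}\left(\frac{V_d}{V_{r+d}}\right)^{a_0}W_{ra_0+s} =\frac{1}{q^{dn}\Delta^n}\left(\frac{V_d}{U_r}\right)^n\left(\frac{V_d}{V_{r+d}}\right)^{a_n}W_{r(n+a_n)+dn+s}\\ &\quad-\left(\frac{V_d}{V_{r+d}}\right)^{c-1}\frac{1}{\Delta^n}\sum_{j=0}^{(n-2)/2}\frac{\Delta^{2j}}{q^{d(n-2j)}}\left(\frac{V_d}{U_r}\right)^{n-2j}W_{(r+d)(n-2j)+r(c-1)+s}\binom{a_n+2j-c}{2j}\\ &\quad-\left(\frac{V_d}{V_{r+d}}\right)^{c-1}\frac{1}{\Delta^{n+2}}\sum_{j=1}^{n/2}\frac{\Delta^{2j}}{q^{d(n-2j+1)}}\left(\frac{V_d}{U_r}\right)^{n-2j+1}\Big(W_{(r+d)(n-2j+1)+r(c-1)+s+1}-qW_{(r+d)(n-2j+1)+r(c-1)+s-1}\Big)\binom{a_n+2j-1-c}{2j-1}, \end{split} \] while if $n$ is a positive odd integer, then \[ \begin{split} &\sum_{a_{n-1}=c}^{a_n}\sum_{a_{n-2}=c}^{a_{n-1}}\cdots\sum_{a_0=c}^{a_1}\left(\frac{V_d}{V_{r+d}}\right)^{a_0}W_{ra_0+s}\\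 &=\frac{1}{q^{dn}\Delta^{n+1}}\left(\frac{V_d}{U_r}\right)^n\left(\frac{V_d}{V_{r+d}}\right)^{a_n}\Big(W_{r(n+a_n)+dn+s+1}-qW_{r(n+a_n)+dn+s-1}\Big)\\ &\quad-\left(\frac{V_d}{V_{r+d}}\right)^{c-1}\frac{1}{\Delta^{n+1}}\sum_{j=0}^{(n-1)/2}\frac{\Delta^{2j}}{q^{d(n-2j)}}\left(\frac{V_d}{U_r}\right)^{n-2j}\Big(W_{(r+d)(n-2j)+r(c-1)+s+1}-qW_{(r+d)(n-2j)+r(c-1)+s-1}\Big)\binom{a_n+2j-c}{2j}\\ &\quad-\left(\frac{V_d}{V_{r+d}}\right)^{c-1}\frac{1}{\Delta^{n+1}}\sum_{j=1}^{(n-1)/2}\frac{\Delta^{2j}}{q^{d(n-2j+1)}}\left(\frac{V_d}{U_r}\right)^{n-2j+1}W_{(r+d)(n-2j+1)+r(c-1)+s}\binom{a_n+2j-1-c}{2j-1}. \end{split} \]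
   Context: Let $a,b,p,q$ be complex numbers with $p\neq0$, $q\neq0$. The Horadam sequence $W_j=W_j(a,b;p,q)$ is defined by $W_0=a$, $W_1=b$, $W_j=pW_{j-1}-qW_{j-2}$ for $j\ge2$, and extended to negative indices by $W_{-m}=(pW_{-m+1}-W_{-m+2})/q$, so the recurrence holds for all integers. $U_j=W_j(0,1;p,q)$ and $V_j=W_j(2,p;p,q)$ are the Lucas sequences of the first and second kinds. $\Delta=\sqrt{p^2-4q}$ (only even powers of $\Delta$ occur, so the choice of square root is immaterial). For integers $c,m$ and a function $f$ on the integers, $\sum_{k=c}^m f(k)$ denotes the usual sum if $m\ge c$, equals $0$ if $m=c-1$, and equals $-\sum_{k=m+1}^{c-1}f(k)$ if $m\le c-2$. The nested sum $\sum_{a_{n-1}=c}^{a_n}\cdots\sum_{a_0=c}^{a_1}g(a_0)$ is the iterated sum with $n$ summation signs: innermost over $a_0$ from $c$ to $a_1$, then $a_1$ from $c$ to $a_2$, ..., outermost $a_{n-1}$ from $c$ to $a_n$. For an integer $j\ge0$ and any number $y$, $\binom{y}{j}=y(y-1)\cdots(y-j+1)/j!$. An empty sum (e.g. $\sum_{j=1}^{0}$) is $0$. *)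

(* Defs.v *)
From mathcomp Require Import all_boot all_order all_algebra.
From mathcomp Require Import reals Rstruct complex.
Set Implicit Arguments. Unset Strict Implicit. Unset Printing Implicit Defensive.
Import Order.TTheory GRing.Theory Num.Theory.
Local Open Scope ring_scope.

Notation C := (Rdefinitions.R)[i].

(* Horadam sequence W_j(a,b;p,q), j integer.
   Wpos a b p q n = (W_n, W_{n+1});  Wneg a b p q m = (W_{-m}, W_{-m+1}). *)
Fixpoint Wpos (a b p q : C) (n : nat) : C * C :=
  match n with
  | 0 => (a, b)
  | n'.+1 => let: (x, y) := Wpos a b p q n' in (y, p * y - q * x)
  end.

Fixpoint Wneg (a b p q : C) (m : nat) : C * C :=
  match m with
  | 0 => (a, b)
  | m'.+1 => let: (x, y) := Wneg a b p q m' in ((p * x - y) / q, x)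
  end.

Definition W (a b p q : C) (j : int) : C :=
  match j with
  | Posz n => (Wpos a b p q n).1
  | Negz m => (Wneg a b p q m.+1).1   (* Negz m = -(m+1) *)
  end.

Definition U (p q : C) (j : int) : C := W 0 1 p q j.
Definition V (p q : C) (j : int) : C := W 2 p p q j.

Definition gsum (c m : int) (f : int -> C) : C :=
  if Order.le c m then \sum_(k < absz (m - c + 1)%R) f (c + k%:Z)
  else - \sum_(k < absz (c - 1 - m)%R) f (m + 1 + k%:Z).

(* Nested sum with n summation signs, all lower limits c, evaluated at
   the outer upper limit x:  nsum 0 c g x = g x,
   nsum (n+1) c g x = \sum_{a=c}^{x} nsum n c g a. *)
Fixpoint nsum (n : nat) (c : int) (g : int -> C) (x : int) : C :=
  match n with
  | 0 => g x
  | n'.+1 => gsum c x (nsum n' c g)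
  end.

Definition binomC (y : C) (j : nat) : C :=
  (\prod_(i < j) (y - i%:R)) / (j`!)%:R.

(* Main.v *)
Require Import Defs.
From mathcomp Require Import all_boot all_order all_algebra.
From mathcomp Require Import reals Rstruct complex.
From mathcomp Require Import ring lra zify.
Import Order.TTheory GRing.Theory Num.Theory.
Local Open Scope ring_scope.

Section Gen.
Variable R : numFieldType.
Fixpoint Wposg (a b p q : R) (n : nat) : R * R :=
  match n with
  | 0 => (a, b)
  | n'.+1 => let: (x, y) := Wposg a b p q n' in (y, p * y - q * x)
  end.
Fixpoint Wnegg (a b p q : R) (m : nat) : R * R :=
  match m with
  | 0 => (a, b)
  | m'.+1 => let: (x, y) := Wnegg a b p q m' in ((p * x - y) / q, x)
  end.
Definition Wg (a b p q : R) (j : int) : R :=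
  match j with
  | Posz n => (Wposg a b p q n).1
  | Negz m => (Wnegg a b p q m.+1).1
  end.
Definition Vg (p q : R) (j : int) : R := Wg 2 p p q j.
Definition Ug (p q : R) (j : int) : R := Wg 0 1 p q j.
Definition gsumg (c m : int) (f : int -> R) : R :=
  if Order.le c m then \sum_(k < absz (m - c + 1)%R) f (c + k%:Z)
  else - \sum_(k < absz (c - 1 - m)%R) f (m + 1 + k%:Z).
Fixpoint nsumg (n : nat) (c : int) (g : int -> R) (x : int) : R :=
  match n with
  | 0 => g x
  | n'.+1 => gsumg c x (nsumg n' c g)
  end.
Definition binomCg (y : R) (j : nat) : R :=
  (\prod_(i < j) (y - i%:R)) / (j`!)%:R.
Lemma binomC0 y : binomCg y 0 = 1.
Proof. by rewrite /binomCg big_ord0 fact0 divr1. Qed.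

Lemma fact_neq0 (n : nat) : (n`!)%:R != 0 :> R.
Proof. by rewrite pnatr_eq0 -lt0n fact_gt0. Qed.

Lemma binomC_pascal y i : binomCg y i.+1 - binomCg (y - 1) i.+1 = binomCg (y - 1) i.
Proof.
rewrite /binomCg big_ord_recl big_ord_recr /=.
have -> : \prod_(i0 < i) (y - (bump 0 i0)%:R) = \prod_(i0 < i) (y - 1 - i0%:R).
  by apply: eq_bigr => j _; rewrite /bump /= add1n -addn1 natrD; ring.
set P := \prod_(_ < _) _.
rewrite factS natrM.
have h1 := fact_neq0 i.
have h2 : (i.+1)%:R != 0 :> R by rewrite pnatr_eq0.
clearbody P. rewrite subr0. have h3 : 1 + i%:R != 0 :> R by rewrite addrC natr1. field. by rewrite h1 h3.
Qed.

Lemma binomC_zero (i : nat) : binomCg i%:R i.+1 = 0.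
Proof. by rewrite /binomCg big_ord_recr /= subrr mulr0 mul0r. Qed.
Lemma intrB1 (m : int) : (m - 1)%:~R = m%:~R - 1 :> R.
Proof. by rewrite intrB. Qed.
Lemma tele (F f : int -> R) :
  (forall k, F k - F (k - 1) = f k) ->
  forall e (N : nat), \sum_(k < N) f (e + k%:Z) = F (e + N%:Z - 1) - F (e - 1).
Proof.
move=> HF e; elim=> [|N IH]; first by rewrite big_ord0 addr0 subrr.
rewrite big_ord_recr /= IH -HF.
have -> : e + N.+1%:Z - 1 = e + N%:Z by rewrite -addn1 PoszD addrA addrK.
ring.
Qed.

Lemma gsum_char (F f : int -> R) c :
  F (c - 1) = 0 -> (forall k, F k - F (k - 1) = f k) ->
  forall m, gsumg c m f = F m.
Proof.
move=> H0 HF m; rewrite /gsumg; case: ifP => hcm.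
  rewrite (tele _ _ HF) gez0_abs; last by lia.
  rewrite H0 subr0; congr F; ring.
rewrite (tele _ _ HF) gez0_abs; last by lia.
have -> : m + 1 + (c - 1 - m) - 1 = c - 1 by ring.
rewrite H0 sub0r opprK; congr F; ring.
Qed.

Lemma gsum_ext c m (f g : int -> R) : (forall k, f k = g k) -> gsumg c m f = gsumg c m g.
Proof. by move=> H; rewrite /gsumg; case: ifP => _; [|congr (- _)]; apply: eq_bigr => k _; rewrite H. Qed.

Lemma nsum_char (F : nat -> int -> R) c g :
  (forall k, F 0%N k = g k) ->
  (forall n, F n.+1 (c - 1) = 0) ->
  (forall n k, F n.+1 k - F n.+1 (k - 1) = F n k) ->
  forall n m, nsumg n c g m = F n m.
Proof.
move=> H0 Hc Hs; elim=> [|n IH] m /=; first by rewrite H0.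
rewrite (gsum_ext _ _ _ _ IH); exact: gsum_char.
Qed.

Definition G (z w : R) (c : int) (n : nat) (m : int) : R :=
  z ^ m * w ^+ n - z ^ (c - 1) * \sum_(i < n) w ^+ (n - i) * binomCg ((m + i%:Z - c)%:~R) i.

Lemma G0 z w c k : G z w c 0 k = z ^ k.
Proof. by rewrite /G big_ord0 expr0 mulr1 mulr0 subr0. Qed.

Lemma Gc z w c n : G z w c n.+1 (c - 1) = 0.
Proof.
rewrite /G big_ord_recl /= binomC0 subn0 mulr1.
rewrite big1 ?addr0 ?subrr // => i _.
have -> : (c - 1 + (bump 0 i)%:Z - c) = i%:Z.
  by rewrite /bump /= add1n -addn1 PoszD; ring.
by rewrite binomC_zero mulr0.
Qed.

Lemma Gstep z w c n k : z != 0 -> w * (z - 1) = z ->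
  G z w c n.+1 k - G z w c n.+1 (k - 1) = G z w c n k.
Proof.
move=> hz hw; rewrite /G.
have E : \sum_(i < n.+1) w ^+ (n.+1 - i) * binomCg (k + i%:Z - c)%:~R i
        - \sum_(i < n.+1) w ^+ (n.+1 - i) * binomCg (k - 1 + i%:Z - c)%:~R i
        = \sum_(i < n) w ^+ (n - i) * binomCg (k + i%:Z - c)%:~R i.
  rewrite -sumrB big_ord_recl /= !binomC0 subrr add0r.
  apply: eq_bigr => i _; rewrite /bump /= add1n subSS -mulrBr.
  have -> : (k - 1 + i.+1%:Z - c)%:~R = (k + i.+1%:Z - c)%:~R - 1 :> R.
    by rewrite -intrB1; congr (_%:~R); ring.
  rewrite binomC_pascal -intrB1; congr (_ * binomCg _%:~R _).
  by rewrite -addn1 PoszD; ring.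
rewrite -E.
have -> : z ^ k = z ^ (k - 1) * z by rewrite -{1}(subrK 1 k) expfzDr.
move: (z ^ (k - 1)) => Z.
apply/eqP; rewrite -subr_eq0; apply/eqP.
set S1 := \sum_(i < n.+1) _. set S2 := \sum_(i < n.+1) _.
transitivity (Z * w ^+ n * (w * (z - 1) - z)); first by rewrite exprS; ring.
by rewrite hw subrr mulr0.
Qed.

Lemma binet (a b p q al be : R) : al != 0 -> be != 0 -> al - be != 0 ->
  al + be = p -> al * be = q ->
  forall j, Wg a b p q j = (b - a * be) / (al - be) * al ^ j + (a * al - b) / (al - be) * be ^ j.
Proof.
move=> ha hb hd hp hq.
set A := (b - a * be) / (al - be); set B := (a * al - b) / (al - be).
pose f (j : int) := A * al ^ j + B * be ^ j.
have rec : forall j, f (j + 2) = p * f (j + 1) - q * f j.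
  move=> j; rewrite /f !expfzDr // -hp -hq.
  rewrite !expr1z; ring.
have f0 : f 0 = a by rewrite /f !expr0z /A /B; field.
have f1 : f 1 = b by rewrite /f !expr1z /A /B; field.
have hpos : forall n : nat, Wposg a b p q n = (f n%:Z, f (n%:Z + 1)).
  elim=> [|n IH] /=; first by rewrite f0 add0r f1.
  rewrite IH /=; congr (_, _); first by rewrite -addn1 PoszD.
  have -> : n.+1%:Z + 1 = n%:Z + 2 by rewrite -addn1 PoszD; ring.
  by rewrite rec.
have hneg : forall m : nat, Wnegg a b p q m = (f (- m%:Z), f (- m%:Z + 1)).
  elim=> [|m IH] /=; first by rewrite oppr0 f0 add0r f1.
  rewrite IH /=; congr (_, _); last by rewrite -addn1 PoszD; congr f; ring.
  have hq0 : q != 0 by rewrite -hq; apply: mulf_neq0.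
  have -> : - m.+1%:Z = - m%:Z - 1 by rewrite -addn1 PoszD; ring.
  have := rec (- m%:Z - 1).
  have -> : - m%:Z - 1 + 2 = - m%:Z + 1 by ring.
  have -> : - m%:Z - 1 + 1 = - m%:Z by ring.
  move=> E; rewrite E.
  move: (f (- m%:Z)) (f (- m%:Z - 1)) => u v; field; exact: hq0.
case=> n; first by rewrite /Wg hpos.
by rewrite /Wg hneg NegzE.
Qed.

Lemma root_term (al x y Q D : R) (r d s M : int) (k : nat) : al != 0 ->
  x ^ M * y ^+ k / Q ^+ k / D ^+ k * al ^ ((r + d) * k%:Z + r * M + s)
  = al ^ s * (x * al ^ r) ^ M * (al ^ (r + d) * y / (Q * D)) ^+ k.
Proof.
move=> ha.
rewrite [al ^ (_ + s)]expfzDr // [al ^ (_ + r * M)]expfzDr // -!exprz_exp expfzMl.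
rewrite !exprMn exprVn exprMn invfM.
have -> : (al ^ (r + d)) ^ k%:Z = (al ^ (r + d)) ^+ k by [].
ring.
Qed.

Section Main.
Variables (a b p q D : R) (r s c d : int).
Hypotheses (hq : q != 0) (hD : D ^+ 2 = p ^+ 2 - 4 * q) (hdisc : p ^+ 2 - 4 * q != 0)
  (hVd : Vg p q d != 0) (hVrd : Vg p q (r + d) != 0) (hUr : Ug p q r != 0).

Let al := (p + D) / 2.
Let be := (p - D) / 2.

Lemma two_neq0 : (2 : R) != 0.
Proof. by rewrite pnatr_eq0. Qed.

Lemma hD0 : D != 0.
Proof. apply/eqP => h; move: hdisc; rewrite -hD h expr0n /=. by rewrite eqxx. Qed.

Lemma alpbe : al + be = p.
Proof. rewrite /al /be; have := two_neq0; move=> h2; by field. Qed.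

Lemma almbe : al - be = D.
Proof. rewrite /al /be; have := two_neq0; move=> h2; by field. Qed.

Lemma altbe : al * be = q.
Proof.
rewrite /al /be; have := two_neq0 => h2.
have -> : (p + D) / 2 * ((p - D) / 2) = (p ^+ 2 - D ^+ 2) / 4.
  by rewrite !expr2; field.
by rewrite hD; field.
Qed.

Lemma al0 : al != 0.
Proof. by apply/eqP => h; move: hq; rewrite -altbe h mul0r eqxx. Qed.

Lemma be0 : be != 0.
Proof. by apply/eqP => h; move: hq; rewrite -altbe h mulr0 eqxx. Qed.

Let A := (b - a * be) / (al - be).
Let B := (a * al - b) / (al - be).

Lemma Wbin j : Wg a b p q j = A * al ^ j + B * be ^ j.
Proof. by apply: (@binet a b p q al be); rewrite ?al0 ?be0 ?almbe ?hD0 ?alpbe ?altbe. Qed.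

Lemma Vbin j : Vg p q j = al ^ j + be ^ j.
Proof.
rewrite /Vg (@binet 2 p p q al be) ?al0 ?be0 ?almbe ?hD0 ?alpbe ?altbe //.
have h := hD0; rewrite -alpbe -almbe in h *.
move: (al ^ j) (be ^ j) => u v; by field.
Qed.

Lemma Ubin j : Ug p q j = (al ^ j - be ^ j) / D.
Proof.
rewrite /Ug (@binet 0 1 p q al be) ?al0 ?be0 ?almbe ?hD0 ?alpbe ?altbe //.
have h := hD0; by field.
Qed.

Let x := Vg p q d / Vg p q (r + d).
Let y := Vg p q d / Ug p q r.
Let zA := x * al ^ r.
Let zB := x * be ^ r.
Let wA := al ^ (r + d) * y / (q ^ d * D).
Let wB := - (be ^ (r + d) * y / (q ^ d * D)).

Lemma x0 : x != 0.
Proof. by rewrite /x mulf_neq0 // invr_eq0. Qed.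

Lemma zA0 : zA != 0.
Proof. by rewrite /zA mulf_neq0 ?x0 // expfz_neq0 // al0. Qed.

Lemma zB0 : zB != 0.
Proof. by rewrite /zB mulf_neq0 ?x0 // expfz_neq0 // be0. Qed.

Lemma hwA : wA * (zA - 1) = zA.
Proof.
have h1 := hVd; have h2 := hVrd; have h3 := hUr; have h4 := hD0.
have h5 : al ^ d != 0 by rewrite expfz_neq0 // al0.
have h6 : be ^ d != 0 by rewrite expfz_neq0 // be0.
rewrite /wA /zA /y /x !Vbin !Ubin -altbe (expfzMl al be d).
rewrite [al ^ (r + d)]expfzDr ?al0 // [be ^ (r + d)]expfzDr ?be0 //.
rewrite !Vbin !Ubin [al ^ (r + d)]expfzDr ?al0 // [be ^ (r + d)]expfzDr ?be0 // in h1 h2 h3.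
move: h1 h2 h3 h5 h6; move: (al ^ r) (al ^ d) (be ^ r) (be ^ d) => u v w t h1 h2 h3 h5 h6.
have h7 : u - w != 0 by apply: contraNneq h3 => ->; rewrite mul0r.
by field; rewrite ?h1 ?h2 ?h4 ?h5 ?h6 ?h7.
Qed.

Lemma hwB : wB * (zB - 1) = zB.
Proof.
have h1 := hVd; have h2 := hVrd; have h3 := hUr; have h4 := hD0.
have h5 : al ^ d != 0 by rewrite expfz_neq0 // al0.
have h6 : be ^ d != 0 by rewrite expfz_neq0 // be0.
rewrite /wB /zB /y /x !Vbin !Ubin -altbe (expfzMl al be d).
rewrite [al ^ (r + d)]expfzDr ?al0 // [be ^ (r + d)]expfzDr ?be0 //.
rewrite !Vbin !Ubin [al ^ (r + d)]expfzDr ?al0 // [be ^ (r + d)]expfzDr ?be0 // in h1 h2 h3.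
move: h1 h2 h3 h5 h6; move: (al ^ r) (al ^ d) (be ^ r) (be ^ d) => u v w t h1 h2 h3 h5 h6.
have h7 : u - w != 0 by apply: contraNneq h3 => ->; rewrite mul0r.
by field; rewrite ?h1 ?h2 ?h4 ?h5 ?h6 ?h7.
Qed.


Let F (k : nat) (m : int) := A * al ^ s * G zA wA c k m + B * be ^ s * G zB wB c k m.

Lemma LHS_F n m : nsumg n c (fun a0 => x ^ a0 * Wg a b p q (r * a0 + s)) m = F n m.
Proof.
apply: nsum_char => [k | k | k k'].
- rewrite /F !G0 Wbin /zA /zB (expfzMl x (al ^ r) k) (expfzMl x (be ^ r) k).
  rewrite (expfzDr _ _ al0) (expfzDr _ _ be0) -(exprz_exp al) -(exprz_exp be).
  clearbody wA wB zA zB x y A B al be; ring.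
- by rewrite /F !Gc !mulr0 addr0.
- rewrite /F -(Gstep zA wA c k k' zA0 hwA) -(Gstep zB wB c k k' zB0 hwB).
  clearbody wA wB zA zB x y A B al be; ring.
Qed.

Let Q (k : nat) := A * al ^ s * zA ^ (c - 1) * wA ^+ k + B * be ^ s * zB ^ (c - 1) * wB ^+ k.
Let P (n : nat) (m : int) := A * al ^ s * zA ^ m * wA ^+ n + B * be ^ s * zB ^ m * wB ^+ n.

Lemma Fexp n m : F n m = P n m - \sum_(i < n) binomCg ((m + i%:Z - c)%:~R) i * Q (n - i).
Proof.
rewrite /F /G /P /Q.
clearbody wA wB zA zB x y A B al be.
have -> : \sum_(i < n) binomCg ((m + i%:Z - c)%:~R) i *
   (A * al ^ s * zA ^ (c - 1) * wA ^+ (n - i) + B * be ^ s * zB ^ (c - 1) * wB ^+ (n - i))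
  = A * al ^ s * zA ^ (c - 1) * (\sum_(i < n) wA ^+ (n - i) * binomCg ((m + i%:Z - c)%:~R) i)
  + B * be ^ s * zB ^ (c - 1) * (\sum_(i < n) wB ^+ (n - i) * binomCg ((m + i%:Z - c)%:~R) i).
  rewrite !mulr_sumr -big_split /=; apply: eq_bigr => i _; ring.
ring.
Qed.


Lemma termE (M : int) (k : nat) : ~~ odd k ->
  x ^ M * y ^+ k / (q ^ d) ^+ k / D ^+ k * Wg a b p q ((r + d) * k%:Z + r * M + s)
  = A * al ^ s * zA ^ M * wA ^+ k + B * be ^ s * zB ^ M * wB ^+ k.
Proof.
move=> hk; rewrite Wbin mulrDr.
have eA := root_term _ x y (q ^ d) D r d s M k al0.
have eB := root_term _ x y (q ^ d) D r d s M k be0.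
have hB : be ^ (r + d) * y / (q ^ d * D) = - wB by rewrite /wB opprK.
rewrite hB exprNn -signr_odd (negbTE hk) expr0 mul1r in eB.
rewrite [_ * (A * _)]mulrCA [_ * (B * _)]mulrCA eA eB /zA /zB /wA.
by rewrite !mulrA.
Qed.

Lemma Wstar e : Wg a b p q (e + 1) - q * Wg a b p q (e - 1) = D * (A * al ^ e - B * be ^ e).
Proof.
rewrite !Wbin !expfzDr ?al0 ?be0 // -!invr_expz !expr1z -altbe -almbe.
have h1 := al0; have h2 := be0.
clearbody A B; move: (al ^ e) (be ^ e) => u v.
by field; rewrite h1 h2.
Qed.

Lemma termO (M : int) (k : nat) : odd k ->
  x ^ M * y ^+ k / (q ^ d) ^+ k / D ^+ k.+1 *
    (Wg a b p q ((r + d) * k%:Z + r * M + s + 1) - q * Wg a b p q ((r + d) * k%:Z + r * M + s - 1))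
  = A * al ^ s * zA ^ M * wA ^+ k + B * be ^ s * zB ^ M * wB ^+ k.
Proof.
move=> hk; rewrite Wstar.
have eA := root_term _ x y (q ^ d) D r d s M k al0.
have eB := root_term _ x y (q ^ d) D r d s M k be0.
have hB : be ^ (r + d) * y / (q ^ d * D) = - wB by rewrite /wB opprK.
rewrite hB exprNn -signr_odd hk expr1 mulN1r in eB.
rewrite -/zA -/zB -/wA in eA eB.
have h0 := hD0.
transitivity (A * (x ^ M * y ^+ k / (q ^ d) ^+ k / D ^+ k * al ^ ((r + d) * k%:Z + r * M + s))
   - B * (x ^ M * y ^+ k / (q ^ d) ^+ k / D ^+ k * be ^ ((r + d) * k%:Z + r * M + s))).
  rewrite exprSr invfM.
  have hv : D ^+ k != 0 by rewrite expf_neq0.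
  clearbody A B zA zB wA; move: hv; move: (x ^ M * y ^+ k / (q ^ d) ^+ k) (D ^+ k) => u v hv.
  move: (al ^ _) (be ^ _) => u1 u2.
  by field; rewrite hv h0.
rewrite eA eB; ring.
Qed.


Lemma termS_E (Dp i k : nat) (K : int) (Y : R) : ~~ odd k -> K = k%:Z -> Dp = (k + i)%N ->
  x ^ (c - 1) / D ^+ Dp * (D ^+ i / q ^ (d * K) * y ^ K
     * Wg a b p q ((r + d) * K + r * (c - 1) + s) * Y) = Y * Q k.
Proof.
move=> hk -> ->; rewrite -exprz_exp exprD /Q -(termE (c - 1) k hk).
change (y ^ (k%:Z)) with (y ^+ k); change ((q ^ d) ^ (k%:Z)) with ((q ^ d) ^+ k).
have h1 : D ^+ i != 0 by rewrite expf_neq0 // hD0.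
have h2 : D ^+ k != 0 by rewrite expf_neq0 // hD0.
have h3 : (q ^ d) ^+ k != 0 by rewrite expf_neq0 // expfz_neq0.
clearbody A B zA zB wA wB Q x y.
move: h1 h2 h3; move: (D ^+ i) (D ^+ k) ((q ^ d) ^+ k) (Wg a b p q _) => u v t w h1 h2 h3.
by field; rewrite h1 h2 h3.
Qed.

Lemma termS_O (Dp i k : nat) (K : int) (Y : R) : odd k -> K = k%:Z -> Dp = (k.+1 + i)%N ->
  x ^ (c - 1) / D ^+ Dp * (D ^+ i / q ^ (d * K) * y ^ K
     * (Wg a b p q ((r + d) * K + r * (c - 1) + s + 1)
        - q * Wg a b p q ((r + d) * K + r * (c - 1) + s - 1)) * Y) = Y * Q k.
Proof.
move=> hk -> ->; rewrite -exprz_exp exprD /Q -(termO (c - 1) k hk).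
change (y ^ (k%:Z)) with (y ^+ k); change ((q ^ d) ^ (k%:Z)) with ((q ^ d) ^+ k).
have h1 : D ^+ i != 0 by rewrite expf_neq0 // hD0.
have h2 : D ^+ k.+1 != 0 by rewrite expf_neq0 // hD0.
have h3 : (q ^ d) ^+ k != 0 by rewrite expf_neq0 // expfz_neq0.
clearbody A B zA zB wA wB Q x y.
move: h1 h2 h3; move: (D ^+ i) (D ^+ k.+1) ((q ^ d) ^+ k) (Wg a b p q _ - _) => u v t w h1 h2 h3.
by field; rewrite h1 h2 h3.
Qed.

Lemma mainE (n : nat) (an : int) : ~~ odd n ->
  (q ^ (d * n%:Z))^-1 / D ^+ n * y ^+ n * x ^ an
         * Wg a b p q (r * (n%:Z + an) + d * n%:Z + s) = P n an.
Proof.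
move=> hn; rewrite /P -(termE an n hn) -exprz_exp.
have -> : r * (n%:Z + an) + d * n%:Z + s = (r + d) * n%:Z + r * an + s by ring.
change ((q ^ d) ^ (n%:Z)) with ((q ^ d) ^+ n).
clearbody x y; move: (Wg a b p q _) => w; ring.
Qed.

Lemma mainO (n : nat) (an : int) : odd n ->
  (q ^ (d * n%:Z))^-1 / D ^+ (n + 1) * y ^+ n * x ^ an
         * (Wg a b p q (r * (n%:Z + an) + d * n%:Z + s + 1)
            - q * Wg a b p q (r * (n%:Z + an) + d * n%:Z + s - 1)) = P n an.
Proof.
move=> hn; rewrite /P -(termO an n hn) -exprz_exp addn1.
have -> : r * (n%:Z + an) + d * n%:Z + s = (r + d) * n%:Z + r * an + s by ring.
change ((q ^ d) ^ (n%:Z)) with ((q ^ d) ^+ n).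
clearbody x y; move: (Wg a b p q _ - _) => w; ring.
Qed.


Lemma sum_even (f : nat -> R) h :
  \sum_(i < (2 * h)%N) f i = \sum_(j < h) f (2 * j)%N + \sum_(j < h) f (2 * j + 1)%N.
Proof.
elim: h => [|h IH]; first by rewrite !big_ord0 addr0.
have -> : (2 * h.+1 = (2 * h).+1.+1)%N by rewrite mulnS.
rewrite !big_ord_recr /= IH.
rewrite addn1; ring.
Qed.

Lemma sum_odd (f : nat -> R) h :
  \sum_(i < (2 * h + 1)%N) f i = \sum_(j < h.+1) f (2 * j)%N + \sum_(j < h) f (2 * j + 1)%N.
Proof.
rewrite addn1 big_ord_recr /= sum_even big_ord_recr /=; ring.
Qed.


Lemma main_even (n : nat) (an : int) : (0 < n)%N -> ~~ odd n ->
     nsumg n c (fun a0 => x ^ a0 * Wg a b p q (r * a0 + s)) an =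
       (q ^ (d * n%:Z))^-1 / D ^+ n * y ^+ n * x ^ an
         * Wg a b p q (r * (n%:Z + an) + d * n%:Z + s)
     - x ^ (c - 1) / D ^+ n *
         \sum_(0 <= j < n./2)
           (D ^+ (2 * j) / q ^ (d * (n%:Z - 2 * j%:Z))
            * y ^ (n%:Z - 2 * j%:Z)
            * Wg a b p q ((r + d) * (n%:Z - 2 * j%:Z) + r * (c - 1) + s)
            * binomCg (an + 2 * j%:Z - c)%:~R (2 * j))
     - x ^ (c - 1) / D ^+ (n + 2) *
         \sum_(1 <= j < n./2 + 1)
           (D ^+ (2 * j) / q ^ (d * (n%:Z - 2 * j%:Z + 1))
            * y ^ (n%:Z - 2 * j%:Z + 1)
            * (Wg a b p q ((r + d) * (n%:Z - 2 * j%:Z + 1) + r * (c - 1) + s + 1)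
               - q * Wg a b p q ((r + d) * (n%:Z - 2 * j%:Z + 1) + r * (c - 1) + s - 1))
            * binomCg (an + 2 * j%:Z - 1 - c)%:~R (2 * j - 1)).
Proof.
move=> _ hodd.
rewrite (mainE n an hodd).
have [h hn] : exists h, n = (2 * h)%N.
  by exists n./2; rewrite -{1}(odd_double_half n) (negbTE hodd) add0n mul2n.
subst n.
have h2 : (2 * h)./2 = h by rewrite mul2n doubleK.
rewrite h2 LHS_F Fexp.
rewrite (sum_even (fun i => binomCg ((an + i%:Z - c)%:~R) i * Q (2 * h - i)) h).
have e1 : x ^ (c - 1) / D ^+ (2 * h) *
         \sum_(0 <= j < h)
           (D ^+ (2 * j) / q ^ (d * ((2 * h)%N%:Z - 2 * j%:Z))
            * y ^ ((2 * h)%N%:Z - 2 * j%:Z)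
            * Wg a b p q ((r + d) * ((2 * h)%N%:Z - 2 * j%:Z) + r * (c - 1) + s)
            * binomCg (an + 2 * j%:Z - c)%:~R (2 * j))
   = \sum_(j < h) binomCg ((an + (2 * j)%N%:Z - c)%:~R) (2 * j) * Q (2 * h - 2 * j).
  rewrite big_mkord mulr_sumr; apply: eq_bigr => j _.
  have hj := ltn_ord j.
  rewrite (termS_E (2 * h) (2 * j) (2 * h - 2 * j)) //.
  - by rewrite -mulnBr oddM.
  - lia.
  - lia.
have e2 : x ^ (c - 1) / D ^+ (2 * h + 2) *
         \sum_(1 <= j < h + 1)
           (D ^+ (2 * j) / q ^ (d * ((2 * h)%N%:Z - 2 * j%:Z + 1))
            * y ^ ((2 * h)%N%:Z - 2 * j%:Z + 1)
            * (Wg a b p q ((r + d) * ((2 * h)%N%:Z - 2 * j%:Z + 1) + r * (c - 1) + s + 1)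
               - q * Wg a b p q ((r + d) * ((2 * h)%N%:Z - 2 * j%:Z + 1) + r * (c - 1) + s - 1))
            * binomCg (an + 2 * j%:Z - 1 - c)%:~R (2 * j - 1))
   = \sum_(j < h) binomCg ((an + (2 * j + 1)%N%:Z - c)%:~R) (2 * j + 1) * Q (2 * h - (2 * j + 1)).
  rewrite addn1 big_add1 /= big_mkord mulr_sumr; apply: eq_bigr => j _.
  have hj := ltn_ord j.
  rewrite (termS_O (2 * h + 2) (2 * j.+1) (2 * h - (2 * j + 1))) //.
  - have -> : (2 * j.+1 - 1 = 2 * j + 1)%N by lia.
    congr (binomCg _%:~R _ * _); lia.
  - rewrite oddB; [by rewrite oddD !oddM | lia].
  - lia.
  - lia.
rewrite e1 e2; ring.
Qed.


Lemma main_odd (n : nat) (an : int) : odd n ->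
     nsumg n c (fun a0 => x ^ a0 * Wg a b p q (r * a0 + s)) an =
       (q ^ (d * n%:Z))^-1 / D ^+ (n + 1) * y ^+ n * x ^ an
         * (Wg a b p q (r * (n%:Z + an) + d * n%:Z + s + 1)
            - q * Wg a b p q (r * (n%:Z + an) + d * n%:Z + s - 1))
     - x ^ (c - 1) / D ^+ (n + 1) *
         \sum_(0 <= j < n./2 + 1)
           (D ^+ (2 * j) / q ^ (d * (n%:Z - 2 * j%:Z))
            * y ^ (n%:Z - 2 * j%:Z)
            * (Wg a b p q ((r + d) * (n%:Z - 2 * j%:Z) + r * (c - 1) + s + 1)
               - q * Wg a b p q ((r + d) * (n%:Z - 2 * j%:Z) + r * (c - 1) + s - 1))
            * binomCg (an + 2 * j%:Z - c)%:~R (2 * j))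
     - x ^ (c - 1) / D ^+ (n + 1) *
         \sum_(1 <= j < n./2 + 1)
           (D ^+ (2 * j) / q ^ (d * (n%:Z - 2 * j%:Z + 1))
            * y ^ (n%:Z - 2 * j%:Z + 1)
            * Wg a b p q ((r + d) * (n%:Z - 2 * j%:Z + 1) + r * (c - 1) + s)
            * binomCg (an + 2 * j%:Z - 1 - c)%:~R (2 * j - 1)).
Proof.
move=> hodd.
rewrite (mainO n an hodd).
have [h hn] : exists h, n = (2 * h + 1)%N.
  by exists n./2; rewrite -{1}(odd_double_half n) hodd add1n addn1 mul2n.
subst n.
have h2 : (2 * h + 1)./2 = h by rewrite addn1 mul2n /= uphalf_double.
rewrite h2 LHS_F Fexp.
rewrite (sum_odd (fun i => binomCg ((an + i%:Z - c)%:~R) i * Q (2 * h + 1 - i)) h).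
have e1 : x ^ (c - 1) / D ^+ (2 * h + 1 + 1) *
         \sum_(0 <= j < h + 1)
           (D ^+ (2 * j) / q ^ (d * ((2 * h + 1)%N%:Z - 2 * j%:Z))
            * y ^ ((2 * h + 1)%N%:Z - 2 * j%:Z)
            * (Wg a b p q ((r + d) * ((2 * h + 1)%N%:Z - 2 * j%:Z) + r * (c - 1) + s + 1)
               - q * Wg a b p q ((r + d) * ((2 * h + 1)%N%:Z - 2 * j%:Z) + r * (c - 1) + s - 1))
            * binomCg (an + 2 * j%:Z - c)%:~R (2 * j))
   = \sum_(j < h.+1) binomCg ((an + (2 * j)%N%:Z - c)%:~R) (2 * j) * Q (2 * h + 1 - 2 * j).
  rewrite [(h + 1)%N]addn1 big_mkord mulr_sumr; apply: eq_bigr => j _.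
  have hj := ltn_ord j.
  rewrite (termS_O (2 * h + 1 + 1)%N (2 * j)%N (2 * h + 1 - 2 * j)%N) //.
  - rewrite oddB; [idtac | lia]. by rewrite oddD !ssrnat.oddM.
  - lia.
  - lia.
have e2 : x ^ (c - 1) / D ^+ (2 * h + 1 + 1) *
         \sum_(1 <= j < h + 1)
           (D ^+ (2 * j) / q ^ (d * ((2 * h + 1)%N%:Z - 2 * j%:Z + 1))
            * y ^ ((2 * h + 1)%N%:Z - 2 * j%:Z + 1)
            * Wg a b p q ((r + d) * ((2 * h + 1)%N%:Z - 2 * j%:Z + 1) + r * (c - 1) + s)
            * binomCg (an + 2 * j%:Z - 1 - c)%:~R (2 * j - 1))
   = \sum_(j < h) binomCg ((an + (2 * j + 1)%N%:Z - c)%:~R) (2 * j + 1) * Q (2 * h + 1 - (2 * j + 1)).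
  rewrite [(h + 1)%N]addn1 big_add1 /= big_mkord mulr_sumr; apply: eq_bigr => j _.
  have hj := ltn_ord j.
  rewrite (termS_E (2 * h + 1 + 1)%N (2 * j.+1)%N (2 * h + 1 - (2 * j + 1))%N) //.
  - have -> : (2 * j.+1 - 1 = 2 * j + 1)%N by lia.
    congr (binomCg _%:~R _ * _); lia.
  - rewrite oddB; [idtac | lia]. rewrite !oddD /=; by case: (odd h); case: (odd j).
  - lia.
  - lia.
rewrite e1 e2; ring.
Qed.

End Main.
End Gen.
Theorem theorem6 (a b p q Delta : C) (r s c d : int)
  (hp : p != 0) (hq : q != 0)
  (hDelta : Delta ^+ 2 = p ^+ 2 - 4 * q) (hdisc : p ^+ 2 - 4 * q != 0)
  (hr : r != 0)
  (hVd : V p q d != 0) (hVrd : V p q (r + d) != 0) (hUr : U p q r != 0) :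
  let Wf := W a b p q in
  let x := V p q d / V p q (r + d) in
  let y := V p q d / U p q r in
  (forall (n : nat) (an : int), (0 < n)%N -> ~~ odd n ->
     nsum n c (fun a0 => x ^ a0 * Wf (r * a0 + s)) an =
       (q ^ (d * n%:Z))^-1 / Delta ^+ n * y ^+ n * x ^ an
         * Wf (r * (n%:Z + an) + d * n%:Z + s)
     - x ^ (c - 1) / Delta ^+ n *
         \sum_(0 <= j < n./2)
           (Delta ^+ (2 * j) / q ^ (d * (n%:Z - 2 * j%:Z))
            * y ^ (n%:Z - 2 * j%:Z)
            * Wf ((r + d) * (n%:Z - 2 * j%:Z) + r * (c - 1) + s)
            * binomC (an + 2 * j%:Z - c)%:~R (2 * j))
     - x ^ (c - 1) / Delta ^+ (n + 2) *
         \sum_(1 <= j < n./2 + 1)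
           (Delta ^+ (2 * j) / q ^ (d * (n%:Z - 2 * j%:Z + 1))
            * y ^ (n%:Z - 2 * j%:Z + 1)
            * (Wf ((r + d) * (n%:Z - 2 * j%:Z + 1) + r * (c - 1) + s + 1)
               - q * Wf ((r + d) * (n%:Z - 2 * j%:Z + 1) + r * (c - 1) + s - 1))
            * binomC (an + 2 * j%:Z - 1 - c)%:~R (2 * j - 1)))
  /\
  (forall (n : nat) (an : int), odd n ->
     nsum n c (fun a0 => x ^ a0 * Wf (r * a0 + s)) an =
       (q ^ (d * n%:Z))^-1 / Delta ^+ (n + 1) * y ^+ n * x ^ an
         * (Wf (r * (n%:Z + an) + d * n%:Z + s + 1)
            - q * Wf (r * (n%:Z + an) + d * n%:Z + s - 1))
     - x ^ (c - 1) / Delta ^+ (n + 1) *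
         \sum_(0 <= j < n./2 + 1)
           (Delta ^+ (2 * j) / q ^ (d * (n%:Z - 2 * j%:Z))
            * y ^ (n%:Z - 2 * j%:Z)
            * (Wf ((r + d) * (n%:Z - 2 * j%:Z) + r * (c - 1) + s + 1)
               - q * Wf ((r + d) * (n%:Z - 2 * j%:Z) + r * (c - 1) + s - 1))
            * binomC (an + 2 * j%:Z - c)%:~R (2 * j))
     - x ^ (c - 1) / Delta ^+ (n + 1) *
         \sum_(1 <= j < n./2 + 1)
           (Delta ^+ (2 * j) / q ^ (d * (n%:Z - 2 * j%:Z + 1))
            * y ^ (n%:Z - 2 * j%:Z + 1)
            * Wf ((r + d) * (n%:Z - 2 * j%:Z + 1) + r * (c - 1) + s)
            * binomC (an + 2 * j%:Z - 1 - c)%:~R (2 * j - 1))).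
Proof.
move=> Wf x y; split.
- move=> n an hn hodd.
  exact: (@main_even C a b p q Delta r s c d hq hDelta hdisc hVd hVrd hUr n an hn hodd).
- move=> n an hodd.
  exact: (@main_odd C a b p q Delta r s c d hq hDelta hdisc hVd hVrd hUr n an hodd).
Qed.
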